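(* Let $\delta>0$ and $x_0>0$. Call a pair $(x(\cdot),y(\cdot))$ admissible if $y:[0,\infty)\to(0,\infty)$ is Lebesgue measurable and locally bounded and $x:[0,\infty)\to\mathbb{R}$ is the (locally absolutely continuous, Carathéodory) solution on $[0,\infty)$ of \[ \dot x(t)=x(t)\big(1-x(t)\big)-y(t)x(t),\qquad x(0)=x_0 . \] Then there is a decreasing function $\omega:[0,\infty)\to(0,\infty)$ with $\omega(t)\to 0$ as $t\to\infty$ such that for every admissible pair $(x(\cdot),y(\cdot))$ \[ \int_T^{T'}e^{-\delta t}\big[\ln x(t)+\ln y(t)\big]\,dt<\omega(T)\qquad\text{for all }0\le T<T'. \] *)

(* Defs.v *)
From HB Require Import structures.
From mathcomp Require Import all_boot all_order all_algebra.
From mathcomp Require Import all_classical all_reals all_analysis.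
Set Implicit Arguments. Unset Strict Implicit. Unset Printing Implicit Defensive.
Import Order.TTheory GRing.Theory Num.Theory.
Import numFieldNormedType.Exports.
Local Open Scope classical_set_scope.
Local Open Scope ring_scope.

(* The real line equipped with the Lebesgue (i.e. completed, Caratheodory)
   sigma-algebra; its carrier is R. *)
Definition LebR (R : realType) :=
  caratheodory_type (R := R) (wlength (R := R) idfun)^*%mu.

Definition leb (R : realType) : set (LebR R) -> \bar R :=
  @completed_lebesgue_measure R.

Definition Icc (R : realType) (a b : R) : set (LebR R) := `[a, b].

Definition admissible_control (R : realType) (y : LebR R -> R) : Prop :=
  measurable_fun (`[0, +oo[ : set (LebR R)) y /\
  (forall t : R, 0 <= t -> 0 < y t) /\
  (forall T : R, 0 <= T -> exists M : R, forall t : R, 0 <= t <= T -> y t <= M).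

(* x is the Caratheodory solution on [0,oo) of
     x' = x (1 - x) - y x,  x(0) = x0,
   i.e. the right-hand side is integrable on every [0,t] and
     x(t) = x0 + int_0^t (x(s)(1 - x(s)) - y(s) x(s)) ds  for all t >= 0
   (equivalently: x locally absolutely continuous with x' = rhs a.e.). *)
Definition caratheodory_solution (R : realType) (x0 : R) (y x : LebR R -> R)
  : Prop :=
  forall t : R, 0 <= t ->
    (@leb R).-integrable (Icc 0 t)
        (fun s => (x s * (1 - x s) - y s * x s)%:E) /\
    ((x t)%:E = x0%:E + \int[@leb R]_(s in (Icc 0 t))
                           (x s * (1 - x s) - y s * x s)%:E)%E.

Definition admissible (R : realType) (x0 : R) (x y : LebR R -> R) : Prop :=
  admissible_control y /\ caratheodory_solution x0 y x.

(* Main.v *)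
Require Import Defs.
From HB Require Import structures.
From mathcomp Require Import all_boot all_order all_algebra.
From mathcomp Require Import all_classical all_reals all_analysis.
Import Order.TTheory GRing.Theory Num.Theory.
Import numFieldNormedType.Exports.
Local Open Scope classical_set_scope.
Local Open Scope ring_scope.
From mathcomp Require Import ring lra.


Section helpers.
Context {R : realType}.
Local Notation L := (LebR R).
Local Notation mu := (@leb R).

Lemma mitv (i : interval R) : measurable ([set` i] : set L).
Proof. apply: sub_caratheodory; exact: measurable_itv. Qed.

Lemma mset1 (a : R) : measurable ([set a] : set L).
Proof. apply: sub_caratheodory; exact: measurable_set1. Qed.

Lemma leb_oc (a b : R) : a <= b -> mu (`]a, b]%classic : set L) = (b - a)%:E.
Proof.
move=> ab; rewrite -[LHS]/(lebesgue_measure _) lebesgue_measure_itv /= lte_fin.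
case: ltP => // ba.
have -> : b = a by apply/eqP; rewrite eq_le ab ba.
by rewrite subrr.
Qed.

Lemma leb_set1 (a : R) : mu ([set a] : set L) = 0%E.
Proof. by rewrite -[LHS]/(lebesgue_measure _) lebesgue_measure_set1. Qed.

Lemma mfun_R (D : set L) (f : R -> R) :
  measurable_fun (setT : set R) f -> measurable_fun D (f : L -> R).
Proof.
move=> mf; apply: (@measurableT_comp _ _ _ _ _ _ f _ (fun t : L => (t : R))) => //.
move=> mD B mB; apply: measurableI => //; apply: sub_caratheodory; exact: mB.
Qed.


Local Open Scope ereal_scope.
Lemma le_int_nm (D : set L) (f h : L -> \bar R) :
  (forall t, D t -> 0 <= h t) -> (forall t, D t -> f t <= h t) ->
  \int[mu]_(t in D) f t <= \int[mu]_(t in D) h t.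
Proof.
move=> h0 fh; rewrite integralE.
apply: (@le_trans _ _ (\int[mu]_(t in D) f^\+ t - 0)).
  by apply: leeB => //; apply: integral_ge0 => t _; exact: funeneg_ge0.
rewrite sube0 ge0_integralE; last by move=> t _; exact: funepos_ge0.
rewrite ge0_integralE //.
apply: le_ereal_sup => _ [g /= hg <-]; exists g => //= t.
apply: (le_trans (hg t)); rewrite /patch; case: ifPn => // /[!inE] Dt.
by rewrite funeposE ge_max fh //= h0.
Qed.

Lemma int_cst_oc (a b k : R) : (a <= b)%R ->
  mu.-integrable (`]a, b]%classic : set L) (fun _ => k%:E).
Proof.
move=> ab; apply/integrableP; split; first exact: measurable_cst.
rewrite (eq_integral (fun _ => (`|k|)%:E)); last by move=> *; rewrite abse_EFin.
rewrite integral_cst; last exact: mitv.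
by rewrite -[X in (_ * X)%E]/(@leb R _) leb_oc// -EFinM ltry.
Qed.
End helpers.



Section phi.
Context {R : realType}.
Variables (delta x0 : R).
Hypothesis hd : 0 < delta.
Hypothesis hx0 : 0 < x0.

Definition mC : R := 4^-1 + x0 + (2 * delta)^-1.
Definition qC : R := expR (- (delta / 2)).
Definition CC : R := mC / (1 - qC).
Definition Phi (a : R) : R := CC * expR (- (delta / 2) * a).

Lemma qC_lt1 : qC < 1.
Proof. by rewrite /qC expR_lt1 oppr_lt0 divr_gt0. Qed.

Lemma mC_gt0 : 0 < mC.
Proof.
have hx0' := hx0; have : 0 < (2 * delta)^-1 by rewrite invr_gt0 mulr_gt0.
rewrite /mC => ?; lra.
Qed.

Lemma CC_gt0 : 0 < CC.
Proof. by rewrite /CC divr_gt0 ?mC_gt0 // subr_gt0 qC_lt1. Qed.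

Lemma Phi_gt0 a : 0 < Phi a.
Proof. by rewrite /Phi mulr_gt0 ?CC_gt0 ?expR_gt0. Qed.

Lemma Phi_decr s t : s < t -> Phi t < Phi s.
Proof.
have hd' := hd.
move=> st; rewrite /Phi ltr_pM2l ?CC_gt0 // ltr_expR.
rewrite !mulNr ltrN2 ltr_pM2l //; lra.
Qed.

Lemma Phi_step a : 0 <= a ->
  expR (- delta * a) * (4^-1 + x0 + a / 4) + Phi (a + 1) <= Phi a.
Proof.
have hd' := hd; have hx0' := hx0.
move=> a0.
pose e := expR (- (delta / 2) * a).
pose E := expR ((delta / 2) * a).
have e0 : 0 < e by exact: expR_gt0.
have eE : e * E = 1 by rewrite /e /E -expRD mulNr addNr expR0.
have E1 : 1 + (delta / 2) * a <= E by exact: expR_ge1Dx.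
have ee : expR (- delta * a) = e * e.
  by rewrite /e -expRD; congr expR; field.
have P1 : Phi (a + 1) = CC * e * qC.
  by rewrite /Phi /qC /e -mulrA -expRD; congr (_ * expR _); ring.
have P0 : Phi a = CC * e by [].
have Cq : CC * (1 - qC) = mC.
  by rewrite /CC divfK // subr_eq0 eq_sym lt_eqF // qC_lt1.
have key : e * (4^-1 + x0 + a / 4) <= mC.
  have H1 : 4^-1 + x0 + a / 4 <= mC * (1 + (delta / 2) * a).
    have -> : mC * (1 + (delta / 2) * a) =
        (4^-1 + x0 + a / 4) + ((4^-1 + x0) * ((delta / 2) * a) + (2 * delta)^-1).
      by rewrite /mC; field; rewrite gt_eqF.
    rewrite lerDl addr_ge0 //; last by rewrite invr_ge0 mulr_ge0 //; lra.
    rewrite mulr_ge0 //; first lra.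
    by rewrite mulr_ge0 //; lra.
  have H2 : mC * (1 + (delta / 2) * a) <= mC * E.
    by rewrite ler_wpM2l // ltW // mC_gt0.
  have := ler_wpM2l (ltW e0) (le_trans H1 H2).
  by rewrite mulrCA eE mulr1.
rewrite ee P1 P0.
have : CC * e * qC = CC * e - mC * e.
  by rewrite -Cq; ring.
move=> ->.
have : e * e * (4^-1 + x0 + a / 4) <= mC * e.
  by rewrite -mulrA mulrC ler_wpM2r // ltW.
lra.
Qed.

Lemma Phi_cvg : Phi t @[t --> +oo] --> (0 : R).
Proof.
have hd' := hd.
apply/cvgrPdist_le => e e0; near=> t.
rewrite sub0r normrN ger0_norm; last exact/ltW/Phi_gt0.
rewrite /Phi mulNr expRN ler_pdivrMr ?expR_gt0 //.
apply: (le_trans _ (ler_wpM2l (ltW e0) (expR_ge1Dx _))).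
have Ht : 2 * CC / (e * delta) <= t.
  by near: t; apply: nbhs_pinfty_ge; exact: num_real.
have : 2 * CC <= e * delta * t.
  by rewrite -ler_pdivrMl ?mulr_gt0 // mulrC.
have := CC_gt0.
have : e * (delta / 2 * t) * 2 = e * delta * t by field.
move=> ? ? ?.
have -> : e * (1 + delta / 2 * t) = e + e * (delta / 2 * t) by ring.
lra.
Unshelve. all: end_near.
Qed.

End phi.



Section sol.
Context {R : realType}.
Local Notation L := (LebR R).
Local Notation mu := (@leb R).
Variables (x0 : R) (x y : L -> R).
Hypothesis hx0 : 0 < x0.
Hypothesis adm : admissible x0 x y.

Let g (s : L) : R := x s * (1 - x s) - y s * x s.

Let ypos t : 0 <= t -> 0 < y t.
Proof. by case: adm => -[_ [+ _] _]; apply. Qed.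

Let intg t : 0 <= t -> mu.-integrable (`[0, t]%classic : set L) (EFin \o g).
Proof. by move=> t0; case: adm => _ /(_ t t0) []. Qed.

Let eqx t : 0 <= t ->
  (x t)%:E = (x0%:E + \int[mu]_(s in (`[0%R, t]%classic : set L)) (g s)%:E)%E.
Proof. by move=> t0; case: adm => _ /(_ t t0) []. Qed.

Let intgS a b : 0 <= a -> a <= b ->
  mu.-integrable (`]a, b]%classic : set L) (EFin \o g).
Proof.
move=> a0 ab; apply: (@integrableS _ _ _ mu (`[0, b]%classic : set L));
  [exact: mitv|exact: mitv| |exact: (intg _ (le_trans a0 ab))].
by move=> z /=; rewrite !in_itv /= => /andP[az ->]; rewrite andbT (le_trans a0) ?ltW.
Qed.

Let x_0 : x 0 = x0.
Proof.
have := eqx _ (lexx 0).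
rewrite (@negligible_integral _ _ _ _ _ (`[0%R, 0%R]%classic : set L) _ (mitv _) (mitv _) (intg _ (lexx 0))); last first.
  by rewrite set_itv1; exact: leb_set1.
by rewrite setDv integral_set0 adde0 => -[].
Qed.

Let diff a b : 0 <= a -> a <= b ->
  (\int[mu]_(s in (`]a, b]%classic : set L)) (g s)%:E = (x b - x a)%:E)%E.
Proof.
move=> a0 ab.
have := eqx _ (le_trans a0 ab).
have -> : (`[0, b]%classic : set L) = `[0, a] `|` `]a, b].
  by rewrite -itv_bndbnd_setU //= bnd_simp.
rewrite integral_setU; last 4 first.
- exact: mitv.
- exact: mitv.
- rewrite -itv_bndbnd_setU //= ?bnd_simp//.
  exact: (measurable_int _ (intg _ (le_trans a0 ab))).
- apply/disj_setPS => z [] /=; rewrite !in_itv /= => /andP[_ za] /andP[az _].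
  by move: (lt_le_trans az za); rewrite ltxx.
have := eqx _ a0.
have : (\int[mu]_(s in (`]a, b]%classic : set L)) (g s)%:E)%E \is a fin_num.
  exact: (integrable_fin_num (mitv _) (intgS _ _ a0 ab)).
move: (\int[mu]_(s in _) _)%E => I2.
move: (\int[mu]_(s in _) _)%E => I1.
case: I1 => [I1| |] //; case: I2 => [I2| |] // _ [->] [] ->.
by congr (_%:E); rewrite opprD addrACA subrr add0r addrC addKr.
Qed.


Let mg (D : set L) b : measurable D -> D `<=` `[0%R, b] -> 0 <= b ->
  measurable_fun D g.
Proof.
move=> mD Db b0; apply/measurable_realfun.measurable_EFinP.
exact: (measurable_funS (mitv _) Db (measurable_int _ (intg _ b0))).
Qed.

Let incr a b K : 0 <= a -> a <= b -> (forall u, a < u <= b -> `|g u| <= K) ->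
  `|x b - x a| <= K * (b - a).
Proof.
move=> a0 ab gK.
have mD : measurable (`]a, b]%classic : set L) by exact: mitv.
have Dsub : (`]a, b]%classic : set L) `<=` `[0%R, b].
  by move=> z /=; rewrite !in_itv /= => /andP[az ->]; rewrite andbT (le_trans a0) ?ltW.
have mgD := mg _ _ mD Dsub (le_trans a0 ab).
rewrite -lee_fin -abse_EFin -diff//.
have H1 := @le_abse_integral _ _ _ mu _ (fun s => (g s)%:E) mD
  (proj2 (measurable_realfun.measurable_EFinP _ _) mgD).
apply: (le_trans H1).
have H2 : (\int[mu]_(s in (`]a, b]%classic : set L)) (cst K%:E) s = (K * (b - a))%:E)%E.
  rewrite integral_cst//.
  by rewrite -[X in (_ * X)%E]/(@leb R _) leb_oc// -EFinM.
rewrite -H2.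
apply: ge0_le_integral => //.
- exact: (measurable_int _ (integrable_abse (intgS _ _ a0 ab))).
Qed.


Section pos.
Variable t : R.
Hypothesis t0 : 0 <= t.

Let G := fine (\int[mu]_(s in (`[0%R, t]%classic : set L)) `|(g s)%:E|)%E.

Let GE : (\int[mu]_(s in (`[0%R, t]%classic : set L)) `|(g s)%:E|)%E = G%:E.
Proof.
rewrite /G fineK//.
exact: (integrable_fin_num (mitv _) (integrable_abse (intg _ t0))).
Qed.

Let G0 : 0 <= G.
Proof. by rewrite -lee_fin -GE; apply: integral_ge0 => s _; exact: abse_ge0. Qed.

Let absx s : 0 <= s -> s <= t -> `|x s| <= x0 + G.
Proof.
have hx0' := hx0.
move=> s0 st.
have Hs : (x s - x0)%:E = (\int[mu]_(u in (`[0%R, s]%classic : set L)) (g u)%:E)%E.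
  by rewrite EFinB (eqx _ s0) addeAC subee// add0e.
have Dsub : (`[0%R, s]%classic : set L) `<=` `[0%R, t].
  by move=> z /=; rewrite !in_itv /= => /andP[-> zs]; rewrite (le_trans zs).
have H1 : `|x s - x0| <= G.
  rewrite -lee_fin -abse_EFin Hs -GE.
  have H0 := @le_abse_integral _ _ _ mu _ (fun u => (g u)%:E) (mitv _)
    (proj2 (measurable_realfun.measurable_EFinP _ _) (mg _ _ (mitv _) Dsub t0)).
  apply: (le_trans H0).
  apply: ge0_subset_integral => //; [exact: mitv|exact: mitv|].
  exact: (measurable_int _ (integrable_abse (intg _ t0))).
have := ler_normD (x s - x0) x0.
rewrite subrK (gtr0_norm hx0) => H2.
lra.
Qed.


Lemma xpos_t : 0 < x t.
Proof.
have hx0' := hx0.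
have [My hMy] : exists My, forall s, 0 <= s <= t -> y s <= My.
  by case: adm => -[_ [_ hb]] _; exact: hb.
have My0 : 0 < My.
  by apply: (lt_le_trans (ypos _ (lexx 0))); apply: hMy; rewrite lexx t0.
pose Lt := 1 + (x0 + G) + My.
have G0' := G0.
have Lt0 : 0 < Lt by rewrite /Lt; lra.
have absg : forall s, 0 <= s -> s <= t -> `|g s| <= `|x s| * Lt.
  move=> s s0 st; rewrite /g.
  have -> : x s * (1 - x s) - y s * x s = x s * (1 - x s - y s) by ring.
  rewrite normrM ler_wpM2l //.
  have := absx _ s0 st; have := hMy s; rewrite s0 st => /(_ isT).
  have := ypos _ s0; rewrite /Lt !ler_norml => ys0 ysM /andP[xl xu].
  by apply/andP; split; lra.
pose h := (4 * Lt)^-1.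
have h0 : 0 < h by rewrite /h invr_gt0; lra.
have Lth : Lt * h = 4^-1 by rewrite /h invfM mulrCA divff ?mulr1 // gt_eqF.
have step : forall r s, 0 <= r -> r <= s -> s <= r + h -> s <= t -> 0 < x r ->
    0 < x s.
  move=> r s r0 rs srh st xr.
  pose P := fun u => r <= u /\ u <= r + h /\ u <= t.
  pose S := [set `|x u - x r| | u in P].
  have S0 : S !=set0.
    exists `|x r - x r|, r => //; split; first exact: lexx.
    by split; [lra|exact: le_trans rs st].
  have Sub : ubound S (2 * (x0 + G)).
    move=> _ [u [ru [_ ut]] <-].
    apply: (le_trans (ler_normB _ _)).
    have := absx _ (le_trans r0 ru) ut; have := absx _ r0 (le_trans rs st).
    move=> ? ?; lra.
  have hS : has_sup S by split => //; exists (2 * (x0 + G)).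
  pose D := sup S.
  have inS u : P u -> `|x u - x r| <= D.
    by move=> Pu; apply: sup_upper_bound => //; exists u.
  have D0 : 0 <= D.
    have := inS r; rewrite subrr normr0; apply; split; first exact: lexx.
    by split; [lra|exact: le_trans rs st].
  have key : forall u, P u -> `|x u - x r| <= (x r + D) * Lt * (u - r).
    move=> u [ru [uh ut]]; apply: incr => // v /andP[rv vu].
    apply: (le_trans (absg v _ _)); first by lra.
      exact: le_trans vu ut.
    rewrite ler_wpM2r //; first exact: ltW.
    have := inS v; have : P v by split; [exact: ltW|split; lra].
    move=> Pv /(_ Pv) Hv.
    have := ler_normD (x v - x r) (x r); rewrite subrK (gtr0_norm xr).
    move=> ?; lra.
  have Dle : D <= (x r + D) / 4.
    apply: ge_sup => // _ [u Pu <-]; apply: (le_trans (key u Pu)).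
    case: Pu => ru [uh ut].
    have -> : (x r + D) / 4 = (x r + D) * Lt * h by rewrite -mulrA Lth.
    rewrite ler_wpM2l //; last by lra.
    by rewrite mulr_ge0 //; [lra|exact: ltW].
  have := inS s; have : P s by split => //; split.
  move=> Ps /(_ Ps); rewrite ler_norml => /andP[H1 H2].
  lra.
have ind : forall k : nat, forall s, 0 <= s -> s <= t -> s <= k%:R * h -> 0 < x s.
  elim => [|k IH] s s0 st sk.
    have -> : s = 0 by apply/eqP; rewrite eq_le s0 andbT; rewrite mul0r in sk.
    by rewrite x_0.
  case: (leP s (k%:R * h)) => [|ks]; first exact: IH.
  have kh0 : 0 <= k%:R * h by rewrite mulr_ge0 // ltW.
  have kht : k%:R * h <= t by apply: ltW; exact: lt_le_trans ks st.
  apply: (step (k%:R * h) s) => //; first exact: ltW.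
    by move: sk; rewrite -natr1 mulrDl mul1r.
  exact: IH.
have [k hk] : exists k : nat, t <= k%:R * h.
  exists (Num.Def.archi_bound (t / h)).
  have := @archi_boundP _ (t / h); rewrite divr_ge0 ?(ltW h0) // => /(_ isT).
  by rewrite ltr_pdivrMr // => /ltW.
exact: (ind k t t0 (lexx t) hk).
Qed.

End pos.

Let xub t : 0 <= t -> x t <= x0 + t / 4.
Proof.
move=> t0.
rewrite -lerBlDl -lee_fin -x_0 -diff // ?lexx //.
have -> : (t / 4)%:E = (\int[mu]_(s in (`]0%R, t]%classic : set L)) (4^-1)%:E)%E.
  rewrite integral_cst; last exact: mitv.
  by rewrite -[X in (_ * X)%E]/(@leb R _) leb_oc // subr0 -EFinM mulrC.
apply: le_integral; [exact: mitv|exact: intgS|exact: int_cst_oc|].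
move=> s; rewrite inE /= in_itv /= => /andP[s0 _].
have xs := xpos_t _ (ltW s0); have ys := ypos _ (ltW s0).
rewrite lee_fin /g.
have := sqr_ge0 (x s - 2^-1); have := mulr_gt0 ys xs.
move=> ? ?; nra.
Qed.

Variable delta : R.
Hypothesis hd : 0 < delta.

Let wt (s : R) : R := expR (- delta * s).
Let hf (s : L) : R := wt s * (4^-1 - g s).

Let hf_ge0 s : 0 <= s -> 0 <= hf s.
Proof.
move=> s0; have xs := xpos_t _ s0; have ys := ypos _ s0.
rewrite /hf mulr_ge0 ?expR_ge0 // /g.
have := sqr_ge0 (x s - 2^-1); have := mulr_gt0 ys xs.
move=> ? ?; nra.
Qed.

Let f_le_hf s : 0 <= s -> expR (- delta * s) * (ln (x s) + ln (y s)) <= hf s.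
Proof.
move=> s0; have xs := xpos_t _ s0; have ys := ypos _ s0.
rewrite /hf /wt ler_wpM2l ?expR_ge0 //.
rewrite -lnM ?posrE //.
have xy0 := mulr_gt0 xs ys.
have := @le_ln1Dx R (x s * y s - 1).
rewrite (_ : 1 + _ = x s * y s); last by ring.
move=> /(_ ltac:(lra)).
have := sqr_ge0 (x s - 2^-1); rewrite /g.
move=> ? ?; nra.
Qed.

Let mwt : measurable_fun (setT : set R) wt.
Proof.
by rewrite /wt; apply: measurableT_comp => //.
Qed.

Let mhf (D : set L) b : measurable D -> D `<=` `[0%R, b] -> 0 <= b ->
  measurable_fun D hf.
Proof.
move=> mD Db b0.
apply: measurable_realfun.measurable_funM; first exact: mfun_R.
apply: measurable_realfun.measurable_funB; first exact: measurable_cst.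
exact: mg Db b0.
Qed.

Let piece a b : 0 <= a -> a < b -> b <= a + 1 ->
  (\int[mu]_(s in (`]a, b]%classic : set L)) (hf s)%:E
     <= (wt a * (4^-1 + x0 + a / 4))%:E)%E.
Proof.
have hx0' := hx0.
move=> a0 ab ba1.
have b0 : 0 <= b by apply: (le_trans a0); exact: ltW.
have mD : measurable (`]a, b]%classic : set L) by exact: mitv.
have Dsub : (`]a, b]%classic : set L) `<=` `[0%R, b].
  by move=> z /=; rewrite !in_itv /= => /andP[az ->]; rewrite andbT (le_trans a0) ?ltW.
have mhfD := mhf _ _ mD Dsub b0.
have mgD := mg _ _ mD Dsub b0.
have igD := intgS _ _ a0 (ltW ab).
pose k := wt a.
have k0 : 0 < k by exact: expR_gt0.
have E1 : (\int[mu]_(s in (`]a, b]%classic : set L)) (k * (4^-1 - g s))%:E =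
    (k * ((b - a) / 4 - (x b - x a)))%:E)%E.
  have -> : (\int[mu]_(s in (`]a, b]%classic : set L)) (k * (4^-1 - g s))%:E =
      \int[mu]_(s in (`]a, b]%classic : set L)) ((k / 4)%:E - (k * g s)%:E))%E.
    by apply: eq_integral => s _; rewrite -EFinB; congr EFin; ring.
  have i1 : mu.-integrable (`]a, b]%classic : set L) (EFin \o (fun=> k / 4)).
    exact: (int_cst_oc a b (k / 4) (ltW ab)).
  have i2 : mu.-integrable (`]a, b]%classic : set L) (EFin \o (fun s => k * g s)).
    apply: (eq_integrable mD (fun s => (k%:E * (EFin \o g) s)%E)).
      by move=> s _; rewrite /= EFinM.
    exact: integrableZl.
  rewrite (integralB_EFin mD i1 i2).
  have -> : (\int[mu]_(s in (`]a, b]%classic : set L)) (k * g s)%:E =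
      \int[mu]_(s in (`]a, b]%classic : set L)) (k%:E * (EFin \o g) s))%E.
    by apply: eq_integral => s _; rewrite /= EFinM.
  rewrite (integralZl mD igD) /= diff //; last exact: ltW.
  rewrite integral_cst //.
  rewrite -[X in (_ * X)%E]/(@leb R _) leb_oc; last exact: ltW.
  by rewrite -!EFinM -EFinB; congr EFin; ring.
apply: (@le_trans _ _ (\int[mu]_(s in (`]a, b]%classic : set L)) (k * (4^-1 - g s))%:E)%E).
  apply: ge0_le_integral => //.
  - move=> s /=; rewrite in_itv /= => /andP[az _].
    by rewrite lee_fin; apply: hf_ge0; apply: (le_trans a0); exact: ltW.
  - exact/measurable_realfun.measurable_EFinP.
  - apply/measurable_realfun.measurable_EFinP.
    apply: measurable_realfun.measurable_funM; first exact: measurable_cst.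
    apply: measurable_realfun.measurable_funB => //; exact: measurable_cst.
  - move=> s /=; rewrite in_itv /= => /andP[az sb].
    have s0 : 0 <= s by apply: (le_trans a0); exact: ltW.
    rewrite lee_fin /hf ler_wpM2r //.
      have := hf_ge0 _ s0; rewrite /hf pmulr_rge0 //; exact: expR_gt0.
    by rewrite /wt /k ler_expR !mulNr lerN2 ler_wpM2l // ltW.
rewrite E1 lee_fin ler_wpM2l //; first exact: ltW.
have := xpos_t _ b0; have := xub _ a0.
move=> ? ?; lra.
Qed.

Let ind (n : nat) : forall a b, 0 <= a -> a < b -> b <= a + n%:R ->
  (\int[mu]_(s in (`]a, b]%classic : set L)) (hf s)%:E
     <= (Phi delta x0 a)%:E)%E.
Proof.
have hx0' := hx0.
elim: n => [|n IH] a b a0 ab bn.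
  by move: bn; rewrite addr0 => bn; exfalso; lra.
have Pst : wt a * (4^-1 + x0 + a / 4) + Phi delta x0 (a + 1) <= Phi delta x0 a :=
  @Phi_step R delta x0 hd hx0 a a0.
have P1 := @Phi_gt0 R delta x0 hd hx0 (a + 1).
case: (leP b (a + 1)) => [ba1|ab1].
  apply: (le_trans (piece _ _ a0 ab ba1)); rewrite lee_fin; lra.
have Hset : (`]a, b]%classic : set L) = `]a, a + 1] `|` `]a + 1, b].
  by rewrite -itv_bndbnd_setU //= bnd_simp; lra.
have b0 : 0 <= b by lra.
have Dsub : (`]a, b]%classic : set L) `<=` `[0%R, b].
  by move=> z /=; rewrite !in_itv /= => /andP[az ->]; rewrite andbT (le_trans a0) ?ltW.
rewrite Hset ge0_integral_setU //; last 5 first.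
- exact: mitv.
- exact: mitv.
- rewrite -Hset; apply/measurable_realfun.measurable_EFinP.
  exact: (mhf _ _ (mitv _) Dsub b0).
- rewrite -Hset => s /=; rewrite in_itv /= => /andP[az _].
  rewrite lee_fin; apply: hf_ge0; lra.
- apply/disj_setPS => z [] /=; rewrite !in_itv /= => /andP[_ za] /andP[az _].
  by move: (lt_le_trans az za); rewrite ltxx.
have H1 := piece _ _ a0 (ltr_pwDr ltr01 (lexx a)) (lexx (a + 1)).
have H2 : (\int[mu]_(s in (`](a + 1)%R, b]%classic : set L)) (hf s)%:E
     <= (Phi delta x0 (a + 1)%R)%:E)%E.
  apply: IH => //; first lra.
  by move: bn; rewrite -natr1; lra.
apply: (le_trans (leeD H1 H2)); rewrite -EFinD lee_fin; lra.
Qed.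

Lemma main_bound T T' : 0 <= T -> T < T' ->
  (\int[@leb R]_(t in (Icc T T'))
     (expR (- delta * t) * (ln (x t) + ln (y t)))%:E <= (Phi delta x0 T)%:E)%E.
Proof.
move=> T0 TT'.
have T'0 : 0 <= T' by apply: (le_trans T0); exact: ltW.
have Dsub : (Icc T T') `<=` `[0%R, T'].
  by move=> z /=; rewrite /Icc /= !in_itv /= => /andP[Tz ->]; rewrite andbT (le_trans T0).
apply: (le_trans (le_int_nm _ _ (fun s => (hf s)%:E) _ _)).
- move=> s; rewrite /Icc /= in_itv /= => /andP[Ts _].
  by rewrite lee_fin; apply: hf_ge0; exact: le_trans Ts.
- move=> s; rewrite /Icc /= in_itv /= => /andP[Ts _].
  by rewrite lee_fin; apply: f_le_hf; exact: le_trans Ts.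
rewrite (ge0_negligible_integral (N := ([set T] : set L))); last 5 first.
- exact: mset1.
- exact: mitv.
- apply/measurable_realfun.measurable_EFinP.
  exact: (mhf _ _ (mitv _) Dsub T'0).
- move=> s; rewrite /Icc /= in_itv /= => /andP[Ts _].
  by rewrite lee_fin; apply: hf_ge0; exact: le_trans Ts.
- exact: leb_set1.
have -> : Icc T T' `\` [set T] = (`]T, T']%classic : set L).
  apply/seteqP; split => z /=.
    rewrite /Icc /= !in_itv /= => -[/andP[Tz zT'] zT].
    by rewrite zT' andbT lt_neqAle Tz andbT eq_sym; apply/eqP.
  rewrite /Icc /= !in_itv /= => /andP[Tz zT']; split.
    by rewrite zT' andbT ltW.
  by move=> zT; move: Tz; rewrite zT ltxx.
have [n hn] : exists n : nat, T' <= T + n%:R.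
  exists (Num.Def.archi_bound (T' - T)).
  have := @archi_boundP _ (T' - T); rewrite subr_ge0 (ltW TT') => /(_ isT).
  by rewrite ltrBlDl => /ltW.
exact: (ind n T T' T0 TT' hn).
Qed.

End sol.

Theorem lemma7p1 (R : realType) (delta x0 : R) (hdelta : 0 < delta) (hx0 : 0 < x0) :
  exists omega : R -> R,
    (forall s t : R, 0 <= s -> s < t -> omega t < omega s) /\
    (forall t : R, 0 <= t -> 0 < omega t) /\
    (omega t @[t --> +oo] --> (0 : R)) /\
    (forall x y : LebR R -> R, admissible x0 x y ->
       forall T T' : R, 0 <= T -> T < T' ->
         (\int[@leb R]_(t in (Icc T T'))
            (expR (- delta * t) * (ln (x t) + ln (y t)))%:E < (omega T)%:E)%E).

Proof.
exists (fun t => 2 * Phi delta x0 t).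
split.
  move=> s t _ st; rewrite ltr_pM2l //; exact: Phi_decr.
split.
  move=> t _; rewrite mulr_gt0 //; exact: Phi_gt0.
split.
  rewrite -(mulr0 2); apply: cvgMl_tmp; exact: Phi_cvg.
move=> x y adm T T' T0 TT'.
apply: (le_lt_trans (@main_bound R x0 x y hx0 adm delta hdelta T T' T0 TT')).
rewrite lte_fin ltr_pMl ?ltr1n //; exact: Phi_gt0.
Qed.
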